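(* If $\mathcal{H}=(V,\mathcal{E})$ is a twin-free hypergraph, then $|V|\leq (TC(\mathcal{H}))^{vc^*(\mathcal{H})}+1$.
   Context: A hypergraph $\mathcal{H}=(V,\mathcal{E})$ (finite) is twin-free if for any two distinct vertices there is a hyperedge containing exactly one of them. A test cover of $\mathcal{H}$ is a set $\mathcal{C}\subseteq\mathcal{E}$ such that every vertex lies in some edge of $\mathcal{C}$ and for every pair $x,y$ of distinct vertices some edge of $\mathcal{C}$ contains exactly one of $x,y$; $TC(\mathcal{H})$ is the minimum size of a test cover. For $X\subseteq V$, the projection is $\mathcal{H}_{|X}=\{e\cap X: e\in\mathcal{E}\}$; $X$ is shattered if $|\mathcal{H}_{|X}|=2^{|X|}$; the VC dimension $vc(\mathcal{H})$ is the maximum size of a shattered set. The dual hypergraph $\mathcal{H}^*$ has the hyperedges of $\mathcal{H}$ as vertices and, for each vertex $v$ of $\mathcal{H}$, a hyperedge consisting of the hyperedges of $\mathcal{H}$ containing $v$; the dual VC dimension is $vc^*(\mathcal{H})=vc(\mathcal{H}^* )$. *)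

(* Defs.v *)
From mathcomp Require Import all_boot.
Set Implicit Arguments. Unset Strict Implicit. Unset Printing Implicit Defensive.

Section Hypergraphs.
Variable V : finType.

Definition twin_free (E : {set {set V}}) : Prop :=
  forall x y : V, x != y -> exists2 e, e \in E & (x \in e) != (y \in e).

Definition is_test_cover (E C : {set {set V}}) : Prop :=
  [/\ C \subset E,
      (forall v : V, exists2 e, e \in C & v \in e) &
      (forall x y : V, x != y -> exists2 e, e \in C & (x \in e) != (y \in e))].

Definition is_test_coverb (E C : {set {set V}}) : bool :=
  [&& C \subset E,
      [forall v : V, [exists e in C, v \in e]] &
      [forall x : V, forall y : V, (x != y) ==> [exists e in C, (x \in e) != (y \in e)]]].

(* minimum size of a test cover (meaningful when a test cover exists) *)
Definition TC (E : {set {set V}}) : nat :=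
  \big[minn/#|E|]_(C : {set {set V}} | is_test_coverb E C) #|C|.

Definition proj (E : {set {set V}}) (X : {set V}) : {set {set V}} :=
  [set e :&: X | e in E].

Definition shattered (E : {set {set V}}) (X : {set V}) : bool :=
  #|proj E X| == 2 ^ #|X|.

Definition vc_on (Vs : {set V}) (E : {set {set V}}) : nat :=
  \max_(X : {set V} | (X \subset Vs) && shattered E X) #|X|.

Definition vc (E : {set {set V}}) : nat := vc_on [set: V] E.
End Hypergraphs.

(* dual hypergraph: vertices are the hyperedges of H (elements of E), and
   for each vertex v of H the hyperedge {e in E | v \in e} *)
Definition dual_edges (V : finType) (E : {set {set V}}) : {set {set {set V}}} :=
  [set [set e in E | v \in e] | v : V].

Definition vc_dual (V : finType) (E : {set {set V}}) : nat :=
  vc_on E (dual_edges E).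

(* Main.v *)
Require Import Defs.
From mathcomp Require Import all_boot.
Set Implicit Arguments. Unset Strict Implicit. Unset Printing Implicit Defensive.

Section Pajor.
Variable T : finType.
Implicit Types F : {set {set T}}.

Definition shb F (X : {set T}) :=
  [forall B : {set T}, (B \subset X) ==> [exists A in F, A :&: X == B]].

Lemma shbP F (X : {set T}) : reflect (forall B : {set T}, B \subset X -> exists2 A, A \in F & A :&: X = B) (shb F X).
Proof.
apply: (iffP forallP) => [H B sBX | H B].
- have /implyP/(_ sBX)/existsP[A /andP[AF /eqP <-]] := H B. by exists A.
- apply/implyP => sBX; have [A AF <-] := H B sBX; apply/existsP; exists A.
  by rewrite AF eqxx.
Qed.

Lemma sh_mono F (G : {set {set T}}) (X : {set T}) : F \subset G -> shb F X -> shb G X.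
Proof.
move=> sFG /shbP H; apply/shbP => B /H [A AF <-]; exists A => //.
exact: (subsetP sFG).
Qed.

Lemma sh_notin F (x : T) (X : {set T}) : (forall A, A \in F -> x \notin A) -> shb F X -> x \notin X.
Proof.
move=> H /shbP/(_ X (subxx X)) [A AF eAX]; apply/negP => xX.
have: x \in A :&: X by rewrite eAX.
rewrite inE => /andP[xA _]. by move: (H A AF); rewrite xA.
Qed.

Lemma sh_U1 F (x : T) (X : {set T}) : shb [set A in F | x \notin A] X -> shb [set A in F | x \in A] X ->
  shb F (x |: X).
Proof.
move=> /shbP H0 /shbP H1; apply/shbP => B sB.
case: (boolP (x \in B)) => xB.
- have sB' : B :\ x \subset X.
    apply/subsetP => y; rewrite !inE => /andP[ny yB].
    by have := subsetP sB y yB; rewrite !inE (negbTE ny).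
  have [A] := H1 _ sB'. rewrite inE => /andP[AF xA] eA. exists A => //.
  apply/setP => y.
  have: (y \in A :&: X) = (y \in B :\ x) by rewrite eA.
  rewrite !inE; case: (eqVneq y x) => [->|ny] /=; by rewrite ?xA ?xB.
- have sB' : B \subset X.
    apply/subsetP => y yB.
    have := subsetP sB y yB; rewrite !inE; case: (eqVneq y x) => [eyx|] //=.
    by move: xB; rewrite -eyx yB.
  have [A] := H0 _ sB'. rewrite inE => /andP[AF xA] eA. exists A => //.
  apply/setP => y.
  have: (y \in A :&: X) = (y \in B) by rewrite eA.
  rewrite !inE; case: (eqVneq y x) => [->|ny] /=; by rewrite ?(negbTE xA) ?(negbTE xB).
Qed.

Lemma notsh0 F (x : T) (X : {set T}) : ~~ shb [set A in F | x \notin A] (x |: X).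
Proof.
apply/negP => h.
have := sh_notin (x := x) _ h; rewrite setU11 => /(_ _)/negP; apply => // A.
by rewrite inE => /andP[].
Qed.

Lemma notsh1 F (x : T) (X : {set T}) : ~~ shb [set A in F | x \in A] (x |: X).
Proof.
apply/negP => /shbP/(_ set0 (sub0set _)) [A]; rewrite inE => /andP[_ xA] e.
have: x \in A :&: (x |: X) by rewrite inE xA setU11.
by rewrite e inE.
Qed.

Lemma pajor F : #|F| <= #|[set X | shb F X]|.
Proof.
move: {2}#|F| (leqnn #|F|) => n; elim: n F => [|n IH] F.
  by rewrite leqn0 => /eqP ->.
move=> HF; case: (leqP #|F| 1) => [F1|F2].
  case: (posnP #|F|) => [->//|F0].
  have [A AF] : exists A, A \in F by apply/set0Pn; rewrite -card_gt0.
  rewrite (leq_trans F1) // card_gt0; apply/set0Pn; exists set0; rewrite inE.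
  apply/shbP => B; rewrite subset0 => /eqP ->; exists A => //; by rewrite setI0.
have [A1 [A2 [A1F A2F neq]]] := card_gt1P F2.
have [x Hx] : exists x, (x \in A1) != (x \in A2).
  apply/existsP; apply: contraR neq => /existsPn H.
  by apply/eqP/setP => y; apply/eqP/negbNE/H.
set F0 := [set A in F | x \notin A]; set F1 := [set A in F | x \in A].
have ecard : #|F0| + #|F1| = #|F|.
  rewrite -(cardsID [set A : {set T} | x \in A] F) addnC; congr (_ + _); apply: eq_card => A;
  by rewrite !inE // andbC.
have [B0 [B1 [B0F B1F]]] : exists B0 B1, B0 \in F0 /\ B1 \in F1.
  move: Hx; case e1: (x \in A1); case e2: (x \in A2) => //= _.
  - by exists A2, A1; rewrite !inE A1F A2F e1 e2.
  - by exists A1, A2; rewrite !inE A1F A2F e1 e2.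
have c0 : 0 < #|F0| by apply/card_gt0P; exists B0.
have c1 : 0 < #|F1| by apply/card_gt0P; exists B1.
have IH0 : #|F0| <= #|[set X | shb F0 X]|.
  by apply: IH; rewrite -ltnS (leq_trans _ HF) // -ecard -addn1 leq_add2l c1.
have IH1 : #|F1| <= #|[set X | shb F1 X]|.
  by apply: IH; rewrite -ltnS (leq_trans _ HF) // -ecard -add1n leq_add2r c0.
set S0 := [set X | shb F0 X]; set S1 := [set X | shb F1 X]; set S := [set X | shb F X].
set I := [set x |: X | X in S0 :&: S1].
have sF0 : F0 \subset F by apply/subsetP => A; rewrite inE => /andP[].
have sF1 : F1 \subset F by apply/subsetP => A; rewrite inE => /andP[].
have sub : (S0 :|: S1) :|: I \subset S.
  apply/subsetP => X; rewrite !inE => /orP[/orP[]|].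
  - exact: sh_mono.
  - exact: sh_mono.
  - case/imsetP => Y; rewrite !inE => /andP[h0 h1] ->; exact: sh_U1.
have disj : (S0 :|: S1) :&: I = set0.
  apply/setP => X; rewrite inE in_set0; apply/negP => /andP[h /imsetP[Y _ eX]].
  by move: h; rewrite eX !inE (negbTE (notsh0 _ _ _)) (negbTE (notsh1 _ _ _)).
have cI : #|I| = #|S0 :&: S1|.
  apply: card_in_imset => X Y; rewrite !inE => /andP[h0 _] /andP[h0' _] e.
  have nX : x \notin X by apply: (sh_notin _ h0) => A; rewrite inE => /andP[].
  have nY : x \notin Y by apply: (sh_notin _ h0') => A; rewrite inE => /andP[].
  by rewrite -(setU1K nX) e setU1K.
apply: leq_trans (subset_leq_card sub).
have := cardsUI (S0 :|: S1) I; rewrite disj cards0 addn0 => ->.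
rewrite cI cardsUI -ecard.
by apply: leq_add.
Qed.

End Pajor.

Lemma count_small (T : finType) (C : {set T}) (d : nat) (S : {set {set T}}) :
  (forall X, X \in S -> (X \subset C) && (#|X| <= d)) -> #|S| <= #|C| ^ d + 1.
Proof.
move=> H; rewrite (cardsD1 set0) addnC; apply: leq_add; last by case: (_ \in _).
rewrite -(card_ord d) -card_ffun_on.
apply: leq_trans (leq_imset_card (fun f : {ffun 'I_d -> T} => [set f i | i : 'I_d]) _).
apply: subset_leq_card; apply/subsetP => X; rewrite !inE => /andP[nX XS].
have /andP[XC Xd] := H X XS.
have [t0 t0X] := set0Pn _ nX.
apply/imsetP; exists [ffun i : 'I_d => nth t0 (enum X) i].
  apply/ffun_onP => i; rewrite ffunE; apply: (subsetP XC).
  case: (ltnP i (size (enum X))) => hi; first by rewrite -mem_enum mem_nth.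
  by rewrite nth_default.
apply/setP => t; apply/idP/imsetP => [tX|[i _ ->]].
  have hi : index t (enum X) < d.
    by rewrite (leq_trans _ Xd) // cardE index_mem mem_enum.
  exists (Ordinal hi) => //; by rewrite ffunE nth_index // mem_enum.
rewrite ffunE; case: (ltnP i (size (enum X))) => hi; first by rewrite -mem_enum mem_nth.
by rewrite nth_default.
Qed.

Theorem proposition1 (V : finType) (E : {set {set V}}) :
  twin_free E ->
  (exists C : {set {set V}}, is_test_cover E C) ->
  #|V| <= (TC E) ^ (vc_dual E) + 1.
Proof.
move=> _ [C0 [C0E C0c C0s]].
have [C /and3P[CE _ /forallP Cs] CTC] : exists2 C, is_test_coverb E C & #|C| <= TC E.
  rewrite /TC; apply: (big_ind (fun m => exists2 C, is_test_coverb E C & #|C| <= m)).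
  - exists E => //; apply/and3P; split => //.
    + apply/forallP => v; have [e eC ve] := C0c v; apply/existsP; exists e.
      by rewrite (subsetP C0E) .
    + apply/forallP => x; apply/forallP => y; apply/implyP => nxy.
      have [e eC ve] := C0s x y nxy; apply/existsP; exists e.
      by rewrite (subsetP C0E).
  - move=> a b [Ca Ha Hca] [Cb Hb Hcb]; case: (leqP a b) => ab.
    + by exists Ca; rewrite // (minn_idPl ab).
    + by exists Cb; rewrite // (minn_idPr (ltnW ab)).
  - by move=> D HD; exists D.
set d := vc_dual E.
apply: (@leq_trans (#|C| ^ d + 1)); last first.
  rewrite leq_add2r; case: (posnP d) => [->//|dp]; by rewrite leq_exp2r.
set g := fun v : V => [set e in C | v \in e].
set F := [set g v | v : V].
have cV : #|V| = #|F|.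
  rewrite card_imset // => u v e; apply/eqP; apply: contraT => nuv.
  have /forallP/(_ v)/implyP/(_ nuv)/existsP[a /andP[aC hv]] := Cs u.
  have : (a \in g u) = (a \in g v) by rewrite e.
  rewrite /g !inE aC /= => h; by move: hv; rewrite h eqxx.
rewrite cV; apply: leq_trans (pajor F) _; apply: count_small => X; rewrite inE => shX.
have XC : X \subset C.
  have [A] := (shbP _ _ shX) X (subxx X).
  move=> /imsetP[v _ ->] <-; apply: subset_trans (subsetIl _ _) _.
  by apply/subsetP => e; rewrite inE => /andP[].
rewrite XC /=; rewrite /d /vc_dual /vc_on.
apply: (leq_bigmax_cond (F := fun X : {set {set V}} => #|X|) (P := fun X : {set {set V}} => (X \subset E) && shattered (dual_edges E) X)).
rewrite (subset_trans XC CE) /= /shattered -card_powerset; apply/eqP; apply: eq_card => Y.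
rewrite inE /proj; apply/imsetP/idP => [[e _ ->]|YX].
  exact: subsetIr.
have [A] := (shbP _ _ shX) Y YX.
move=> /imsetP[v _ ->] eA.
exists [set e in E | v \in e]; first by apply/imsetP; exists v.
rewrite -eA; apply/setP => e; rewrite !inE.
case eX: (e \in X); rewrite ?andbF //=.
have eC := subsetP XC e eX; have eE := subsetP CE e eC.
by rewrite eC eE.
Qed.
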